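(* Let $\mathcal G$ be a shortest-path game in which $\mathrm{Val}^{\mathrm d}(v)\neq+\infty$ and $\overline{\mathrm{Val}}^{\mathrm m}(v)\neq+\infty$ for all vertices $v$. Let $\sigma_1$ be a fake-optimal NC-strategy of Min, $\sigma_2$ an attractor strategy of Min, $p\in(0,1)$, $\rho_p$ the memoryless strategy defined below, and $v_0\in V$. Then for every memoryless strategy $\tau$ of Max, $\mathbb P^{\rho_p,\tau}_{v_0}(\Diamond T)=1$, i.e. the target set is reached with probability 1.
   Context: A shortest-path game is $\mathcal G=(V_{\mathrm{Max}},V_{\mathrm{Min}},T,E,w)$ with finite $V=V_{\mathrm{Max}}\uplus V_{\mathrm{Min}}\uplus T$, edges $E\subseteq (V\setminus T)\times V$ with every non-target vertex having a successor, and integer weights $w\colon E\to\mathbb Z$. Plays from $v$ are finite paths ending at their first visit to $T$ (total payoff $\mathrm{TP}$ = sum of weights) or infinite paths avoiding $T$ ($\mathrm{TP}=+\infty$). Strategies of Min (resp. Max) map finite paths ending in $V_{\mathrm{Min}}$ (resp. $V_{\mathrm{Max}}$) to distributions on successors of the last vertex; deterministic = always Dirac, memoryless = depends only on the last vertex. For deterministic $\sigma,\tau$, $\mathrm{Val}^\sigma(v)=\sup_\tau \mathrm{TP}$ of the unique conforming play, and $\mathrm{Val}^{\mathrm d}(v)=\inf_\sigma\mathrm{Val}^\sigma(v)$. For memoryless $\rho$ (Min) and $\tau$ (Max), $\mathbb P^{\rho,\tau}_v$ and $\mathbb E^{\rho,\tau}_v$ refer to the induced Markov chain from $v$; $\overline{\mathrm{Val}}^{\mathrm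 m}(v)=\inf_\rho\sup_\tau\mathbb E^{\rho,\tau}_v(\mathrm{TP})$ over memoryless strategies. A path conforms to a memoryless deterministic Min strategy $\sigma_1$ if each Min vertex $u$ on it (except possibly the last) is followed by $\sigma_1(u)$. An NC-strategy is a memoryless deterministic Min strategy all of whose conforming cycles have negative total weight; it is fake-optimal if for all $v$, every finite play from $v$ ending in $T$ conforming to it has total payoff at most $\mathrm{Val}^{\mathrm d}(v)$. An attractor strategy is a memoryless deterministic Min strategy guaranteeing that every conforming play reaches $T$. The strategy $\rho_p$: for $v\in V_{\mathrm{Min}}$, if the strongly connected component of $v$ in $(V,E)$ contains no negative-weight cycle, $\rho_p(v)$ is the Dirac distribution on $\sigma_1(v)$; otherwise, if $\sigma_1(v)\ne\sigma_2(v)$, $\rho_p(v)$ chooses $\sigma_1(v)$ with probability $p$ and $\sigma_2(v)$ with probability $1-p$, and if $\sigma_1(v)=\sigma_2(v)$ it chooses it with probability 1. *)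

(* Defs.v *)
From HB Require Import structures.
From mathcomp Require Import all_boot all_order all_algebra.
From mathcomp Require Import boolp classical_sets functions reals ereal esum.
Set Implicit Arguments.
Unset Strict Implicit.
Unset Printing Implicit Defensive.
Import Order.TTheory GRing.Theory Num.Theory.
Local Open Scope classical_set_scope.
Local Open Scope ring_scope.

Record game (V : finType) := Game {
  VMax : {set V};
  VMin : {set V};
  Tg   : {set V};
  E    : rel V;
  w    : V -> V -> int }.

Definition wf_game (V : finType) (G : game V) : Prop :=
  [/\ [&& [disjoint VMax G & VMin G], [disjoint VMax G & Tg G]
       & [disjoint VMin G & Tg G]], (forall v, [|| v \in VMax G, v \in VMin G | v \in Tg G]),
      (forall u v, E G u v -> u \notin Tg G) &
      (forall u, u \notin Tg G -> exists v, E G u v)].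

Fixpoint pweight (V : Type) (w : V -> V -> int) (x : V) (s : seq V) : int :=
  if s is y :: s' then w x y + pweight w y s' else 0.

Definition is_finplay (V : finType) (G : game V) (x : V) (s : seq V) : bool :=
  [&& path (E G) x s, last x s \in Tg G & all (fun y => y \notin Tg G) (belast x s)].

(* A history is a finite path x :: s (x = initial vertex); a strategy  *)
(* maps it to the next vertex.                                          *)
Definition dstrat (V : Type) := V -> seq V -> V.

Definition valid_dstrat (V : finType) (G : game V) (S : {set V}) (sg : dstrat V) :=
  forall x s, last x s \in S -> E G (last x s) (sg x s).

Fixpoint ppref (V : finType) (G : game V) (sg tau : dstrat V) (v : V) (n : nat)
  : seq V :=
  match n with
  | 0 => [::]
  | n.+1 => let s := ppref G sg tau v n in
            let c := last v s in
            if c \in Tg G then s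
            else rcons s (if c \in VMin G then sg v s else tau v s)
  end.

Definition dTP (R : realType) (V : finType) (G : game V) (sg tau : dstrat V)
  (v : V) : \bar R :=
  match pselect (exists n, last v (ppref G sg tau v n) \in Tg G) with
  | left H => (((pweight (w G) v (ppref G sg tau v (projT1 (cid H))))%:~R : R)%:E)
  | right _ => +oo%E
  end.

Definition Val_sigma (R : realType) (V : finType) (G : game V) (sg : dstrat V)
  (v : V) : \bar R :=
  ereal_sup [set dTP R G sg tau v | tau in [set tau | valid_dstrat G (VMax G) tau]].

Definition Val_d (R : realType) (V : finType) (G : game V) (v : V) : \bar R :=
  ereal_inf [set Val_sigma R G sg v | sg in [set sg | valid_dstrat G (VMin G) sg]].

Definition valid_md (V : finType) (G : game V) (sg : V -> V) :=
  forall u, u \in VMin G -> E G u (sg u).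

Definition conforms (V : finType) (G : game V) (sg : V -> V) (x : V) (s : seq V) :=
  path (fun a b => (a \in VMin G) ==> (b == sg a)) x s.

Definition is_cycle (V : finType) (G : game V) (x : V) (s : seq V) :=
  [&& s != [::], path (E G) x s & last x s == x].

Definition NC_strategy (V : finType) (G : game V) (sg : V -> V) : Prop :=
  valid_md G sg /\
  forall x s, is_cycle G x s -> conforms G sg x s -> pweight (w G) x s < 0.

Definition fake_optimal (R : realType) (V : finType) (G : game V) (sg : V -> V) :=
  forall v s, is_finplay G v s -> conforms G sg v s ->
    ((((pweight (w G) v s)%:~R : R)%:E) <= Val_d R G v)%E.

(* every conforming play reaches T, i.e. there is no infinite conforming
   path (such a path necessarily avoids T, which has no outgoing edges) *)
Definition attractor (V : finType) (G : game V) (sg : V -> V) : Prop :=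
  valid_md G sg /\
  ~ exists f : nat -> V, (forall i, E G (f i) (f i.+1)) /\
      (forall i, f i \in VMin G -> f i.+1 = sg (f i)).

Definition scc (V : finType) (G : game V) (v : V) : pred V :=
  fun u => connect (E G) v u && connect (E G) u v.

Definition scc_has_neg_cycle (V : finType) (G : game V) (v : V) : Prop :=
  exists x s, [/\ is_cycle G x s, all (scc G v) (x :: s) & pweight (w G) x s < 0].

Definition rho_p (R : realType) (V : finType) (G : game V) (s1 s2 : V -> V) (p : R)
  : V -> V -> R :=
  fun v u =>
    if `[< scc_has_neg_cycle G v >] && (s1 v != s2 v) then
      (if u == s1 v then p else if u == s2 v then 1 - p else 0)
    else (u == s1 v)%:R.

Definition valid_mr (R : realType) (V : finType) (G : game V) (S : {set V})
  (t : V -> V -> R) : Prop :=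
  forall u, u \in S ->
    [/\ forall v, 0 <= t u v, \sum_v t u v = 1 & forall v, 0 < t u v -> E G u v].

(* transition probabilities; targets are absorbing (plays stop there) *)
Definition chain (R : realType) (V : finType) (G : game V) (rho tau : V -> V -> R)
  (u v : V) : R :=
  if u \in VMin G then rho u v else if u \in VMax G then tau u v else 0.

Fixpoint reachn (R : realType) (V : finType) (G : game V) (rho tau : V -> V -> R)
  (n : nat) : V -> R :=
  fun v => match n with
  | 0 => (v \in Tg G)%:R
  | n.+1 => if v \in Tg G then 1
            else \sum_u chain G rho tau v u * reachn G rho tau n u
  end.

(* P^{rho,tau}_v (<> T) = lim_n P(<>^{<= n} T) = sup_n *)
Definition Preach (R : realType) (V : finType) (G : game V) (rho tau : V -> V -> R)
  (v : V) : R := sup (range (fun n => reachn G rho tau n v)).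

(* probability of the cylinder of the finite path x :: s *)
Fixpoint pprob (R : realType) (V : finType) (G : game V) (rho tau : V -> V -> R)
  (x : V) (s : seq V) : R :=
  if s is y :: s' then chain G rho tau x y * pprob G rho tau y s' else 1.

(* E^{rho,tau}_v(TP) = \int TP^+ - \int TP^- ; TP = +oo off <>T *)
Definition ETP (R : realType) (V : finType) (G : game V) (rho tau : V -> V -> R)
  (v : V) : \bar R :=
  if Preach G rho tau v < 1 then +oo%E
  else ((\esum_(s in [set s | is_finplay G v s])
           (pprob G rho tau v s * Num.max ((pweight (w G) v s)%:~R) 0)%:E)
        - (\esum_(s in [set s | is_finplay G v s])
           (pprob G rho tau v s * Num.max (- (pweight (w G) v s)%:~R) 0)%:E))%E.

Definition Val_m_bar (R : realType) (V : finType) (G : game V) (v : V) : \bar R :=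
  ereal_inf [set ereal_sup [set ETP G rho tau v |
                              tau in [set tau | valid_mr G (VMax G) tau]]
            | rho in [set rho | valid_mr G (VMin G) rho]].

(* Main.v *)
Require Import Defs.
From HB Require Import structures.
From mathcomp Require Import all_boot all_order all_algebra.
From mathcomp Require Import boolp classical_sets functions reals ereal esum.
From mathcomp Require Import lra.
Import Order.TTheory GRing.Theory Num.Theory.
Local Open Scope classical_set_scope.
Local Open Scope ring_scope.

Set Implicit Arguments. Unset Strict Implicit.

Lemma reach_T (R : realType) (V : finType) (G : game V) (rho tau : V -> V -> R) n v :
  v \in Tg G -> reachn G rho tau n v = 1.
Proof. by case: n => [|n] /= ->. Qed.

Lemma reach_ge0 (R : realType) (V : finType) (G : game V) (rho tau : V -> V -> R) :
  (forall u v, 0 <= chain G rho tau u v) ->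
  forall n v, 0 <= reachn G rho tau n v.
Proof.
move=> Hc0; elim=> [|n IH] v /=; first by case: (v \in Tg G).
case: (v \in Tg G) => //; apply: sumr_ge0 => u _; exact: mulr_ge0.
Qed.

Lemma reach_le1 (R : realType) (V : finType) (G : game V) (rho tau : V -> V -> R) :
  (forall u v, 0 <= chain G rho tau u v) ->
  (forall u, u \notin Tg G -> \sum_v chain G rho tau u v = 1) ->
  forall n v, reachn G rho tau n v <= 1.
Proof.
move=> Hc0 Hc1; elim=> [|n IH] v /=; first by case: (v \in Tg G).
case: ifP => // hv; rewrite -(Hc1 v (negbT hv)).
apply: ler_sum => u _; rewrite -{2}(mulr1 (chain G rho tau v u)).
exact: ler_wpM2l.
Qed.

Lemma reach_mono (R : realType) (V : finType) (G : game V) (rho tau : V -> V -> R) :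
  (forall u v, 0 <= chain G rho tau u v) ->
  forall n v, reachn G rho tau n v <= reachn G rho tau n.+1 v.
Proof.
move=> Hc0; elim=> [|n IH] v.
  rewrite /=; case: (v \in Tg G) => //=.
  by apply: sumr_ge0 => u _; apply: mulr_ge0 => //; case: (u \in Tg G).
rewrite [reachn _ _ _ n.+1 v]/= [reachn _ _ _ n.+2 v]/=; case: ifP => // _.
apply: ler_sum => u _; exact: ler_wpM2l.
Qed.

Lemma reach_monoD (R : realType) (V : finType) (G : game V) (rho tau : V -> V -> R) :
  (forall u v, 0 <= chain G rho tau u v) ->
  forall k n v, reachn G rho tau n v <= reachn G rho tau (k + n) v.
Proof.
move=> Hc0; elim=> [|k IH] n v //; apply: le_trans (IH n v) _; exact: reach_mono.
Qed.

Lemma reach_mul (R : realType) (V : finType) (G : game V) (rho tau : V -> V -> R) :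
  (forall u v, 0 <= chain G rho tau u v) ->
  (forall u, u \notin Tg G -> \sum_v chain G rho tau u v = 1) ->
  forall n c, 0 <= c -> (forall u, 1 - reachn G rho tau n u <= c) ->
  forall m v, 1 - reachn G rho tau (m + n) v <= c * (1 - reachn G rho tau m v).
Proof.
move=> Hc0 Hc1 n c c0 Hn; elim=> [|m IH] v.
  rewrite add0n /=; case hv: (v \in Tg G).
    by rewrite reach_T // subrr mulr0.
  by rewrite subr0 mulr1.
rewrite addSn /=; case: ifP => hv; first by rewrite subrr mulr0.
have S := Hc1 v (negbT hv).
have e1 : forall f : V -> R, 1 - \sum_u chain G rho tau v u * f u
   = \sum_u chain G rho tau v u * (1 - f u).
  by move=> f; rewrite -{1}S -sumrB; apply: eq_bigr => u _; rewrite mulrBr mulr1.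
rewrite !e1 mulr_sumr.
apply: ler_sum => u _; rewrite mulrCA; apply: ler_wpM2l => //.
Qed.

Lemma reach_pow (R : realType) (V : finType) (G : game V) (rho tau : V -> V -> R) :
  (forall u v, 0 <= chain G rho tau u v) ->
  (forall u, u \notin Tg G -> \sum_v chain G rho tau u v = 1) ->
  forall N c, 0 <= c -> (forall u, 1 - reachn G rho tau N u <= c) ->
  forall k v, 1 - reachn G rho tau (k * N) v <= c ^+ k.
Proof.
move=> Hc0 Hc1 N c c0 HN; elim=> [|k IH] v.
  rewrite mul0n expr0; have := reach_ge0 Hc0 0 v; lra.
rewrite mulSnr; apply: le_trans (reach_mul Hc0 Hc1 c0 HN (k * N) v) _.
rewrite exprS; exact: ler_wpM2l.
Qed.

Lemma geom (R : realType) (c eps : R) : 0 <= c < 1 -> 0 < eps ->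
  exists k : nat, c ^+ k < eps.
Proof.
move=> /andP[c0 c1] e0.
have H : forall k : nat, c ^+ k * (1 + k%:R * (1 - c)) <= 1.
  elim=> [|k IH]; first by rewrite expr0 mul0r addr0 mulr1.
  have h1 : c ^+ k.+1 <= 1 by apply: exprn_ile1 => //; apply: ltW.
  have h0 : 0 <= c ^+ k by apply: exprn_ge0.
  have hk : 0 <= k%:R :> R by [].
  rewrite exprS -natr1.
  have : c * (c ^+ k * (1 + k%:R * (1 - c))) <= c by rewrite ler_piMr.
  have h2 : c * c ^+ k <= 1 by rewrite -exprS.
  nra.
set x := 1 / ((1 - c) * eps).
have x0 : 0 <= x by rewrite /x divr_ge0 // mulr_ge0 // ?subr_ge0 ?ltW.
exists (Num.Def.archi_bound x); have := archi_boundP x0.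
set K := (Num.Def.archi_bound x)%:R => hK.
have := H (Num.Def.archi_bound x); rewrite -/K => hH.
have h0 : 0 <= c ^+ (Num.Def.archi_bound x) by apply: exprn_ge0.
have hx : x * ((1 - c) * eps) = 1 by rewrite /x mul1r mulVf // mulf_neq0 // gt_eqF // subr_gt0.
rewrite ltNge; apply/negP => hc.
have : K * ((1 - c) * eps) > 1 by rewrite -{1}hx ltr_pM2r // mulr_gt0 // subr_gt0.
nra.
Qed.

Lemma reach_path (R : realType) (V : finType) (G : game V) (rho tau : V -> V -> R) :
  (forall u v, 0 <= chain G rho tau u v) ->
  forall s x, path (fun a b => 0 < chain G rho tau a b) x s -> last x s \in Tg G ->
  0 < reachn G rho tau (size s) x.
Proof.
move=> Hc0; elim=> [|y s IH] x /=; first by move=> _ ->.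
move=> /andP[hxy hp] hl; case: ifP => // hx.
rewrite (bigD1 y) //=.
have := IH y hp hl => hr.
have : 0 <= \sum_(i | i != y) chain G rho tau x i * reachn G rho tau (size s) i.
  by apply: sumr_ge0 => u _; apply: mulr_ge0 => //; apply: reach_ge0.
have := mulr_gt0 hxy hr; lra.
Qed.

Lemma preach_one (R : realType) (V : finType) (G : game V) (rho tau : V -> V -> R) :
  (forall u v, 0 <= chain G rho tau u v) ->
  (forall u, u \notin Tg G -> \sum_v chain G rho tau u v = 1) ->
  (forall v, exists2 t, t \in Tg G & connect (fun a b => 0 < chain G rho tau a b) v t) ->
  forall v0, Preach G rho tau v0 = 1.
Proof.
move=> Hc0 Hc1 Hreach v0.
have Hpos : forall s : seq V, exists N, forall v, v \in s -> 0 < reachn G rho tau N v.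
  elim=> [|x s [N HN]]; first by exists 0%N.
  have [t tT /connectP [q hq hl]] := Hreach x.
  have hx := reach_path Hc0 hq; rewrite -hl in hx; have {}hx := hx tT.
  exists (maxn N (size q)) => v; rewrite inE => /orP [/eqP -> | hv].
    apply: lt_le_trans hx _; rewrite -(subnK (leq_maxr N (size q))).
    exact: reach_monoD.
  apply: lt_le_trans (HN v hv) _; rewrite -(subnK (leq_maxl N (size q))).
  exact: reach_monoD.
have [N HN] := Hpos (enum V).
have Hc : forall s : seq V, exists c, [/\ 0 <= c, c < 1 &
    forall v, v \in s -> 1 - reachn G rho tau N v <= c].
  elim=> [|x s [c [c0 c1 Hcs]]]; first by exists 0; split.
  have hx := HN x (mem_enum _ x); have hx1 := reach_le1 Hc0 Hc1 N x.
  have [hle|hlt] := leP c (1 - reachn G rho tau N x).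
    exists (1 - reachn G rho tau N x); split; [lra|lra|].
    move=> v; rewrite inE => /orP [/eqP -> | hv] //; apply: le_trans (Hcs v hv) hle.
  exists c; split => // v; rewrite inE => /orP [/eqP -> | hv]; [lra|exact: Hcs].
have [c [c0 c1 Hcv]] := Hc (enum V).
have {}Hcv : forall v, 1 - reachn G rho tau N v <= c by move=> v; apply: Hcv; exact: mem_enum.
have Hk := reach_pow Hc0 Hc1 c0 Hcv.
set E := range (fun n => reachn G rho tau n v0).
have ub : ubound E 1 by move=> y [n _ <-]; apply: reach_le1.
have ne : E !=set0 by exists (reachn G rho tau 0 v0), 0%N.
rewrite /Preach -/E; apply/eqP; rewrite eq_le; apply/andP; split.
  exact: ge_sup.
rewrite leNgt; apply/negP => hs.
have [k hk] := geom (c := c) (eps := 1 - sup E) (introT andP (conj c0 c1)) ltac:(lra).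
have := Hk k v0.
have : reachn G rho tau (k * N) v0 <= sup E.
  apply: sup_upper_bound; first by split => //; exists 1.
  by exists (k * N)%N.
lra.
Qed.

Lemma rho_ge0 (R : realType) (V : finType) (G : game V) (s1 s2 : V -> V) (p : R) :
  0 < p < 1 -> forall v u, 0 <= rho_p G s1 s2 p v u.
Proof.
move=> /andP[p0 p1] v u; rewrite /rho_p; case: ifP => _.
  case: ifP => _; [lra|case: ifP => _; lra].
by case: (u == s1 v).
Qed.

Lemma rho_sum (R : realType) (V : finType) (G : game V) (s1 s2 : V -> V) (p : R) :
  forall v, \sum_u rho_p G s1 s2 p v u = 1.
Proof.
move=> v; rewrite /rho_p.
case: (boolP (`[< scc_has_neg_cycle G v >] && (s1 v != s2 v))) => [/andP[_ hne]|_] /=.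
  rewrite (bigD1 (s1 v)) //= eqxx (bigD1 (s2 v)) /=; last by rewrite eq_sym.
  rewrite eq_sym (negbTE hne) eqxx big1 ?addr0; first by rewrite addrC subrK.
  by move=> u /andP[h1 h2]; rewrite (negbTE h1) (negbTE h2).
rewrite (bigD1 (s1 v)) //= eqxx big1 ?addr0 // => u /negbTE -> //.
Qed.

Lemma rho1 (R : realType) (V : finType) (G : game V) (s1 s2 : V -> V) (p : R) :
  0 < p < 1 -> forall v, 0 < rho_p G s1 s2 p v (s1 v).
Proof.
move=> /andP[p0 p1] v; rewrite /rho_p eqxx; case: ifP => _ //; exact: ltr01.
Qed.

Lemma rho2 (R : realType) (V : finType) (G : game V) (s1 s2 : V -> V) (p : R) :
  0 < p < 1 -> forall v, scc_has_neg_cycle G v -> 0 < rho_p G s1 s2 p v (s2 v).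
Proof.
move=> /andP[p0 p1] v hn; rewrite /rho_p.
have -> : `[< scc_has_neg_cycle G v >] = true by apply/asboolP.
case: (eqVneq (s1 v) (s2 v)) => [e|ne] /=.
  by rewrite ?e ?eqxx /= ltr01.
by rewrite ?eqxx /=; lra.
Qed.

Lemma rho2' (R : realType) (V : finType) (G : game V) (s1 s2 : V -> V) (p : R) :
  forall v, 0 < rho_p G s1 s2 p v (s2 v) -> s2 v != s1 v -> scc_has_neg_cycle G v.
Proof.
move=> v; rewrite /rho_p; case: ifP => [/andP[/asboolP h _]|_] //.
by move=> + /negbTE h; rewrite h ltxx.
Qed.

Theorem proposition11 (R : realType) (V : finType) (G : game V)
  (sigma1 sigma2 : V -> V) (p : R) (v0 : V) :
  wf_game G ->
  (forall v, Val_d R G v != +oo%E) ->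
  (forall v, Val_m_bar R G v != +oo%E) ->
  NC_strategy G sigma1 -> fake_optimal R G sigma1 ->
  attractor G sigma2 ->
  0 < p < 1 ->
  forall tau : V -> V -> R, valid_mr G (VMax G) tau ->
    Preach G (rho_p G sigma1 sigma2 p) tau v0 = 1.
Proof.
move=> wf _ _ [vm1 NC] _ [vm2 noinf] hp tau vtau.
move: wf; rewrite /wf_game => -[/and3P[d1 d2 d3] cover noTedge succ].
set rho := rho_p G sigma1 sigma2 p.
have notT : forall v, v \notin Tg G -> v \notin VMin G -> v \in VMax G.
  by move=> v h1 h2; move: (cover v); rewrite (negbTE h1) (negbTE h2) !orbF.
have Hc0 : forall u v, 0 <= chain G rho tau u v.
  move=> u v; rewrite /chain; case: ifP => _; first exact: rho_ge0.
  by case: ifP => // hu; have [] := vtau u hu.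
have Hc1 : forall u, u \notin Tg G -> \sum_v chain G rho tau u v = 1.
  move=> u hu; rewrite /chain; case hm: (u \in VMin G); first exact: rho_sum.
  have hM := notT u hu (negbT hm); rewrite hM; by have [] := vtau u hM.
apply: preach_one => // z.
case: (pselect (exists2 t, t \in Tg G &
   connect (fun a b => 0 < chain G rho tau a b) z t)) => // Hz; exfalso.
pose Zp v := ~ exists2 t, t \in Tg G & connect (fun a b => 0 < chain G rho tau a b) v t.
pose g v := if v \in VMin G then (if 0 < rho v (sigma2 v) then sigma2 v else sigma1 v)
            else odflt v [pick u | 0 < tau v u].
have g1 : forall v, v \notin Tg G -> E G v (g v) /\ 0 < chain G rho tau v (g v).
  move=> v hv; rewrite /g /chain; case hm: (v \in VMin G).
    case: ifP => h; first by split => //; apply: vm2.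
    split; [exact: vm1 | exact: rho1].
  have hM := notT v hv (negbT hm); rewrite hM.
  case: pickP => [u hu|hnone] /=.
    by split => //; have [_ _ ] := vtau v hM; apply.
  exfalso; have [h0 h1 _] := vtau v hM; move: h1; rewrite big1 => [|u _].
    by move/eqP; rewrite eq_sym oner_eq0.
  by apply/eqP; rewrite eq_le h0 andbT leNgt hnone.
have g2 : forall v, Zp v -> v \notin Tg G.
  by move=> v hz; apply/negP => hv; apply: hz; exists v.
have g3 : forall v, Zp v -> Zp (g v).
  move=> v hz [t ht hc]; have hv := g2 v hz; apply: hz; exists t => //.
  apply: connect_trans hc; apply: connect1; exact: (g1 v hv).2.
have orb : forall k, Zp (iter k g z).
  by elim=> [|k IH] //; rewrite iterS; apply: g3.
pose h (i : 'I_#|V|.+1) := iter i g z.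
have : ~~ injectiveb h.
  apply/negP => /injectiveP inj; have := leq_card _ inj; by rewrite card_ord ltnn.
move=> /injectivePn [i [j ij hij]].
have [a [b [ab e]]] : exists a b, (a < b)%N /\ iter a g z = iter b g z.
  case: (ltngtP i j) => hl; [by exists i, j | by exists j, i |].
  by move: ij; rewrite (val_inj hl) eqxx.
clear i j ij hij.
pose y := iter a g z; pose m := (b - a)%N.
have m0 : (0 < m)%N by rewrite subn_gt0.
have per : iter m g y = y by rewrite /y -iterD subnK ?(ltnW ab) // -e.
have Zy : forall k, Zp (iter k g y) by move=> k; rewrite /y -iterD.
have Cyc : forall u, iter m g u = u -> (forall k, Zp (iter k g u)) ->
    u \in VMin G -> g u != sigma2 u -> False.
  move=> u peru Zu uMin gu2.
  have nh : ~ scc_has_neg_cycle G u.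
    move=> hn; have hr := @rho2 R V G sigma1 sigma2 p hp u hn; move: gu2.
    by rewrite /g uMin -/rho hr eqxx.
  have Ek : forall k, E G (iter k g u) (iter k.+1 g u).
    by move=> k; rewrite iterS; exact: (g1 _ (g2 _ (Zu k))).1.
  have cf : forall j k, connect (E G) (iter k g u) (iter (j + k) g u).
    elim=> [|j0 IH] k //; rewrite addSn; apply: connect_trans (IH k) _.
    exact: connect1.
  have imul : forall q, iter (q * m) g u = u.
    by elim=> [|q IH] //; rewrite mulSn iterD IH.
  have cu1 : forall k, connect (E G) u (iter k g u).
    by move=> k; have := cf k 0%N; rewrite addn0.
  have cu2 : forall k, connect (E G) (iter k g u) u.
    move=> k; have := cf (k * m - k)%N k; rewrite subnK ?imul //.
    exact: leq_pmulr.
  have hnv : forall k, scc_has_neg_cycle G (iter k g u) -> scc_has_neg_cycle G u.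
    move=> k [x [s [hc hall hw]]]; exists x, s; split => //.
    apply: sub_all hall => w; rewrite /scc => /andP[h1 h2]; apply/andP; split.
      exact: connect_trans (cu1 k) h1.
    exact: connect_trans h2 (cu2 k).
  have conf1 : forall k, iter k g u \in VMin G -> g (iter k g u) = sigma1 (iter k g u).
    move=> k hk; rewrite {1}/g hk; case: ifP => // hr.
    apply/eqP; apply: contraT => hne; exfalso; apply: nh; apply: (hnv k).
    exact: rho2' hr hne.
  pose s := traject g (g u) m.
  have allP0 : all (mem (traject g u m.+1)) (u :: s) by rewrite -trajectS; exact: allss.
  have hpath : path (E G) u s.
    apply: (sub_in_path _ allP0 (fpath_traject g u m)).
    by move=> a' b' /trajectP[i' _ ->] _ /eqP <-; exact: (g1 _ (g2 _ (Zu i'))).1.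
  have hconf : conforms G sigma1 u s.
    apply: (sub_in_path _ allP0 (fpath_traject g u m)).
    move=> a' b' /trajectP[i' _ ->] _ /eqP <-; apply/implyP => hk.
    by rewrite conf1.
  have hcyc : is_cycle G u s.
    by rewrite /is_cycle hpath -size_eq0 size_traject -lt0n m0 /s last_traject peru eqxx.
  have hneg := NC u s hcyc hconf.
  apply: nh; exists u, s; split => //.
  rewrite -trajectS; apply/allP => x /trajectP[i' _ ->]; rewrite /scc cu1 cu2.
  done.
case: (pselect (forall k, iter k g y \in VMin G -> g (iter k g y) = sigma2 (iter k g y)))
  => [Hall|Hnot].
  apply: noinf; exists (fun k => iter k g y); split => k.
    rewrite iterS; exact: (g1 _ (g2 _ (Zy k))).1.
  by move=> hk; rewrite iterS; apply: Hall.
move/existsNP: Hnot => [k0 /not_implyP [hk hne]].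
apply: (Cyc (iter k0 g y)).
- by rewrite -iterD addnC iterD per.
- by move=> k; rewrite -iterD.
- exact: hk.
- by apply/eqP.
Qed.
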